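(* Fix $\alpha\in(0,1)$. In the two-sided weakly dependent Gaussian testing model described in the context, suppose $n_1\to\infty$ and $n_1/n\to p_1\in(0,1]$ as $n\to\infty$, and let $\mu_{(n_1)}=\max_{i\in\mathcal I_1}|\mu_i|$. If $\lim_{n_1\to\infty}\frac{\sqrt{2\log n_1}}{\mu_{(n_1)}}$ exists and is strictly less than $1$, then for both the two-sided adjusted Bonferroni procedure and the two-sided Sidak procedure, $\lim_{n\to\infty}AnyPwr_{BS}=1$.
   Context: $\Phi$ denotes the standard normal distribution function. Let $(\rho_{ij})_{i,j\ge1}$ be a symmetric array with $\rho_{ii}=1$ and $\rho_{ij}\in(-1,1)$ for $i\ne j$, such that for each $n$ the matrix $\Sigma_n=(\rho_{ij})_{1\le i,j\le n}$ is a valid correlation matrix. Put $\rho_m=\sup_{i\ge1}|\rho_{i,\,i+m}|$ and assume the weak dependence condition: $\gamma:=\sup_{m\ge 1}\rho_m<1$ and $\rho_m=o(1/\log m)$ as $m\to\infty$. For each $n$ one observes $(X_1,\dots,X_n)$, jointly Gaussian with $\mathbb{E}X_i=\mu_i$ (the means may depend on $n$), $\mathrm{Var}(X_i)=1$ and correlation matrix $\Sigma_n$. One tests $H_{0i}:\mu_i=0$ versus $H_{1i}:\mu_i\neq0$, $i=1,\dots,n$. Let $\mathcal I_1=\{i\le n:\mu_i\ne0\}$, $n_1=|\mathcal I_1|$. Define $c_{Bon}(m,\alpha):=\Phi^{-1}\bigl(1-\frac{-\log(1-\alpha)}{m}\bigr)$ and $c_{Sid}(m,\alpha):=\Phi^{-1}\bigl((1-\alpha)^{1/m}\bigr)$.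 The two-sided adjusted Bonferroni procedure rejects $H_{0i}$ iff $|X_i|>c_{Bon}(2n,\alpha)$; the two-sided Sidak procedure rejects $H_{0i}$ iff $|X_i|>c_{Sid}(2n,\alpha)$. For a procedure rejecting when $|X_i|>c$, $AnyPwr_{BS}=\mathbb{P}\bigl(|X_i|>c\text{ for some }i\in\mathcal I_1\bigr)$. *)

(* Defs.v *)
From HB Require Import structures.
From mathcomp Require Import all_boot all_order all_algebra.
From mathcomp Require Import all_classical all_reals all_analysis.
Set Implicit Arguments. Unset Strict Implicit. Unset Printing Implicit Defensive.
Import Order.TTheory GRing.Theory Num.Theory.
Import numFieldNormedType.Exports.
Local Open Scope classical_set_scope.
Local Open Scope ring_scope.

Section Defs.
Variable R : realType.

Definition gauss_law (m v : R) (A : set R) : \bar R :=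
  if v == 0 then \d_m A else normal_prob m (Num.sqrt v) A.

Definition jointly_gaussian d (T : measurableType d) (P : probability T R)
  (n : nat) (X : 'I_n -> T -> R) (mu : 'I_n -> R) (S : 'I_n -> 'I_n -> R) :=
  forall (c : 'I_n -> R) (A : set R), measurable A ->
    P ((fun w => \sum_(i < n) c i * X i w) @^-1` A) =
    gauss_law (\sum_(i < n) c i * mu i)
              (\sum_(i < n) \sum_(j < n) c i * c j * S i j) A.

Definition Phi (x : R) : R := fine (normal_prob 0 1 `]-oo, x]).
Definition Phiinv (p : R) : R := sup [set x | Phi x <= p].

Definition c_Bon (m : nat) (alpha : R) : R :=
  Phiinv (1 - (- ln (1 - alpha)) / m%:R).
Definition c_Sid (m : nat) (alpha : R) : R :=
  Phiinv (powR (1 - alpha) (m%:R^-1)).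

Definition rho_lag (rho : nat -> nat -> R) (m : nat) : R :=
  sup [set `|rho i (i + m)%N| | i in [set: nat]].

Definition correlation_array (rho : nat -> nat -> R) :=
  (forall i j, rho i j = rho j i) /\ (forall i, rho i i = 1) /\
  (forall i j, i <> j -> -1 < rho i j < 1) /\
  (forall (n : nat) (c : 'I_n -> R),
      0 <= \sum_(i < n) \sum_(j < n) c i * c j * rho i j).

Definition weakly_dependent (rho : nat -> nat -> R) :=
  sup [set rho_lag rho m | m in [set m : nat | (1 <= m)%N]] < 1 /\
  (fun m : nat => rho_lag rho m * ln m%:R) @ \oo --> 0.

Definition n_one (n : nat) (mu : 'I_n -> R) : nat := #|[set i | mu i != 0]|.
(* mu_(n_1) = max_{i in I_1} |mu_i| (0 if I_1 is empty) *)
Definition mu_max (n : nat) (mu : 'I_n -> R) : R :=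
  \big[Num.max/0]_(i < n | mu i != 0) `|mu i|.

Definition AnyPwr d (T : measurableType d) (P : probability T R) (n : nat)
  (X : 'I_n -> T -> R) (mu : 'I_n -> R) (c : R) : R :=
  fine (P [set w | exists i : 'I_n, mu i != 0 /\ c < `|X i w|]).

End Defs.

(* Main.v *)
Require Import Defs.
From HB Require Import structures.
From mathcomp Require Import all_boot all_order all_algebra.
From mathcomp Require Import all_classical all_reals all_analysis.
From mathcomp Require Import ring lra measurable_realfun.
Import Order.TTheory GRing.Theory Num.Theory.
Import numFieldNormedType.Exports.
Local Open Scope classical_set_scope.
Local Open Scope ring_scope.

Section S.
Variable R : realType.

Lemma pdf_bound (m t x : R) : 0 <= t -> m + t <= x ->
  normal_pdf m 1 x <= expR (- t ^+ 2 / 2) * normal_pdf (m + t) 1 x.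
Proof.
move=> t0 tx; rewrite /normal_pdf oner_eq0 /= /normal_fun.
rewrite mulrCA ler_pM2l ?normal_peak_gt0 ?oner_eq0// -expRD ler_expR.
rewrite expr1n.

have : t ^+ 2 + (x - (m + t)) ^+ 2 <= (x - m) ^+ 2 by nra.
lra.
Qed.

Lemma pdf_bound2 (m t x : R) : 0 <= t -> x <= m - t ->
  normal_pdf m 1 x <= expR (- t ^+ 2 / 2) * normal_pdf (m - t) 1 x.
Proof.
move=> t0 tx; rewrite /normal_pdf oner_eq0 /= /normal_fun.
rewrite mulrCA ler_pM2l ?normal_peak_gt0 ?oner_eq0// -expRD ler_expR.
rewrite expr1n.

have : t ^+ 2 + (x - (m - t)) ^+ 2 <= (x - m) ^+ 2 by nra.
lra.
Qed.
Lemma tail_gen (m m' k : R) (A : set R) : measurable A -> 0 <= k ->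
  (forall x, A x -> normal_pdf m 1 x <= k * normal_pdf m' 1 x) ->
  (normal_prob m 1 A <= k%:E)%E.
Proof.
move=> mA k0 H; rewrite /normal_prob.
apply: (@le_trans _ _ (\int[lebesgue_measure]_(x in A) (k%:E * (normal_pdf m' 1 x)%:E))%E).
  apply: ge0_le_integral => //.
  - by move=> x _; rewrite lee_fin normal_pdf_ge0.
  - apply/measurable_EFinP; apply: measurable_funTS; exact: measurable_normal_pdf.
  - apply/measurable_EFinP; apply: measurable_funTS; apply: measurable_funM.
      exact: measurable_cst.
    exact: measurable_normal_pdf.
rewrite ge0_integralZl_EFin //; last 2 first.
  - by move=> x _; rewrite lee_fin normal_pdf_ge0.
  - apply/measurable_EFinP; apply: measurable_funTS; exact: measurable_normal_pdf.
rewrite -[leRHS]mule1; apply: lee_wpmul2l; first by rewrite lee_fin.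
exact: (@probability_le1 _ _ _ (normal_prob m' 1)).
Qed.

Lemma tail_up (m t : R) : 0 <= t ->
  (normal_prob m 1 `[(m + t)%R, +oo[ <= (expR (- t ^+ 2 / 2))%:E)%E.
Proof.
move=> t0; apply: (@tail_gen _ (m + t)) => //.

move=> x; rewrite /= in_itv /= andbT => tx; exact: pdf_bound.
Qed.

Lemma tail_down (m t : R) : 0 <= t ->
  (normal_prob m 1 `]-oo, (m - t)%R] <= (expR (- t ^+ 2 / 2))%:E)%E.
Proof.
move=> t0; apply: (@tail_gen _ (m - t)) => //.
move=> x; rewrite /= in_itv /= => tx; exact: pdf_bound2.
Qed.
Local Notation N01 := (normal_prob (0:R) 1).

Lemma N01_fin (A : set R) : measurable A -> N01 A \is a fin_num.
Proof. move=> mA; exact: (fin_num_measure N01 A mA). Qed.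

Lemma Phi_le (x y : R) : x <= y -> Phi x <= Phi y.
Proof.
move=> xy; rewrite /Phi; apply: fine_le; rewrite ?inE; try exact: N01_fin.
apply: le_measure; rewrite ?inE //.
by move=> z /=; rewrite !in_itv /= => /le_trans; apply.
Qed.

Lemma Phi_ge (x : R) : 0 <= x -> 1 - expR (- x ^+ 2 / 2) <= Phi x.
Proof.
move=> x0.
have H : (N01 `]x, +oo[ <= (expR (- x ^+ 2 / 2))%:E)%E.
  apply: (@tail_gen _ (0 + x)) => //.

  move=> z; rewrite /= in_itv /= andbT => tx.
  apply: (@pdf_bound 0 x z x0); rewrite add0r; exact: ltW.
have E : `]-oo, x]%classic = ~` `]x, +oo[%classic :> set R by rewrite setCitvr.
rewrite /Phi E probability_setC //.
have F := @N01_fin `]x, +oo[%classic (measurable_itv _).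
rewrite fineB //= lerB //.
have -> : expR (- x ^+ 2 / 2) = fine (expR (- x ^+ 2 / 2))%:E by [].
by apply: fine_le; rewrite ?inE.
Qed.

Lemma Phiinv_le (p x0 : R) : 0 <= x0 -> p < Phi x0 -> Phiinv p <= x0.
Proof.
move=> x00 px; rewrite /Phiinv.
have [->|ne] := eqVneq [set x | Phi x <= p] set0; first by rewrite sup0.
apply: ge_sup; first exact/set0P.
move=> x /= xp; rewrite leNgt; apply/negP => x0x.
have := @Phi_le _ _ (ltW x0x); lra.
Qed.
Lemma c_le (a p : R) (n : nat) : 0 < a -> (0 < n)%N -> a <= 8 * n%:R ->
  a / (4 * n%:R) <= 1 - p -> Phiinv p <= Num.sqrt (2 * ln (8 * n%:R / a)).
Proof.
move=> a0 n0 an ap.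
have n0' : 0 < (n%:R : R) by rewrite ltr0n.
have q1 : 1 <= 8 * n%:R / a by rewrite ler_pdivlMr // mul1r.
have lq : 0 <= ln (8 * n%:R / a) by rewrite ln_ge0.
apply: Phiinv_le; first exact: sqrtr_ge0.
have := @Phi_ge (Num.sqrt (2 * ln (8 * n%:R / a))) (sqrtr_ge0 _).
suff : p < 1 - expR (- Num.sqrt (2 * ln (8 * n%:R / a)) ^+ 2 / 2) by lra.
rewrite sqr_sqrtr; last by rewrite mulr_ge0.
have -> : - (2 * ln (8 * n%:R / a)) / 2 = - ln (8 * n%:R / a) by field.
rewrite expRN lnK; last by rewrite posrE divr_gt0 // mulr_gt0.
rewrite invf_div.
have : a / (8 * n%:R) < a / (4 * n%:R).
  rewrite ltr_pM2l // ltf_pV2 ?posrE ?mulr_gt0 //; lra.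
lra.
Qed.

Lemma expR_bound (u : R) : 0 <= u -> u / 2 <= 1 - expR (- u) \/ 1 < u.
Proof.
move=> u0; have [u1|u1] := leP u 1; last by right.
left; rewrite expRN.
have e1 := expR_ge1Dx u.
have ep : 0 < expR u by exact: expR_gt0.
rewrite -[X in X <= _](@mulfK _ (expR u)) ?gt_eqF //.
have -> : 1 - (expR u)^-1 = (expR u - 1) / expR u by field; rewrite gt_eqF.
rewrite ler_pM2r ?invr_gt0 //.
have : u / 2 * expR u <= u / 2 * (1 + u) -> True by [].
nra.
Qed.
Lemma sum_delta (n : nat) (i : 'I_n) (f : 'I_n -> R) :
  \sum_(j < n) (if j == i then 1 else 0) * f j = f i.
Proof.
rewrite (bigD1 i) //= eqxx mul1r big1 ?addr0 // => j /negbTE ->; by rewrite mul0r.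
Qed.

Lemma power_lb d (T : measurableType d) (P : probability T R) (n : nat)
  (X : 'I_n -> {RV P >-> R}) (mu : 'I_n -> R) (S : 'I_n -> 'I_n -> R)
  (i : 'I_n) (c t : R) :
  S i i = 1 -> jointly_gaussian P (fun j => X j) mu S -> mu i != 0 ->
  0 <= t -> t <= `|mu i| - c ->
  1 - expR (- t ^+ 2 / 2) <= AnyPwr P (fun j => X j) mu c /\
  AnyPwr P (fun j => X j) mu c <= 1.
Proof.
move=> Sii JG mui0 t0 tc.
pose E := [set w | exists j : 'I_n, mu j != 0 /\ c < `|X j w|].
have mE : measurable E.
  have -> : E = \bigcup_(j in [set j | mu j != 0]) (X j @^-1` (`]c, +oo[ `|` `]-oo, (- c)[)).
    apply/seteqP; split => w /=.
      move=> [j [mj cj]]; exists j => //=.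
      move: cj; rewrite ltr_normr => /orP [h|h]; [left|right]; rewrite /= in_itv /= ?andbT //.
      by rewrite ltrNr.
    move=> [j mj /= h]; exists j; split => //.
    rewrite ltr_normr; case: h => /=; rewrite in_itv /= ?andbT => h.
      by rewrite h.
    by rewrite ltrNr h orbT.
  apply: fin_bigcup_measurable.
    exact: finite_finset.
  move=> j _; apply: measurable_funPTI; apply: measurableU; exact: measurable_itv.
pose del := fun j : 'I_n => if j == i then (1 : R) else 0.
have JGi := JG del.
have Yeq : (fun w => \sum_(j < n) del j * X j w) = (fun w => X i w).
  by apply/funext => w; rewrite /del sum_delta.
have meq : \sum_(j < n) del j * mu j = mu i by rewrite /del sum_delta.
have veq : \sum_(j < n) \sum_(k < n) del j * del k * S j k = 1.
  rewrite /del; under eq_bigr do under eq_bigr do rewrite -mulrA.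
  under eq_bigr do rewrite -mulr_sumr.
  by rewrite sum_delta sum_delta.
have key : forall B : set R, measurable B ->
    P ((fun w => X i w) @^-1` B) = normal_prob (mu i) 1 B.
  move=> B mB; rewrite -Yeq JGi // meq veq /gauss_law oner_eq0 sqrtr1 //.
pose B : set R := if 0 < mu i then `]-oo, c]%classic else `[(- c)%R, +oo[%classic.
have mB : measurable B by rewrite /B; case: ifP => _; exact: measurable_itv.
have sub : (fun w => X i w) @^-1` (~` B) `<=` E.
  move=> w /=; rewrite /B; case: ifP => _ /=; rewrite in_itv /= ?andbT => /negP.
    by rewrite -ltNge => h; exists i; split => //; rewrite ltr_normr h.
  by rewrite -ltNge => h; exists i; split => //; rewrite ltr_normr ltrNr h orbT.
have tailB : (normal_prob (mu i) 1 B <= (expR (- t ^+ 2 / 2))%:E)%E.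
  rewrite /B; case: ifPn => m0.
    apply: (@tail_gen _ (mu i - t)) => //.
    move=> x; rewrite /= in_itv /= => xc; apply: pdf_bound2 => //.
    move: tc; rewrite gtr0_norm //; lra.
  apply: (@tail_gen _ (mu i + t)) => //.
  move=> x; rewrite /= in_itv /= andbT => xc; apply: pdf_bound => //.
  move: m0 tc; rewrite -leNgt => m0; rewrite ler0_norm //; lra.
have mpre : measurable ((fun w => X i w) @^-1` (~` B)).
  by apply: measurable_funPTI; exact: measurableC.
have le1 : (P ((fun w => X i w) @^-1` (~` B)) <= P E)%E.
  by apply: le_measure; rewrite ?inE.
rewrite key in le1; last exact: measurableC.
rewrite probability_setC // in le1.
have FB : normal_prob (mu i) 1 B \is a fin_num := fin_num_measure (normal_prob (mu i) 1) B mB.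
have FE : P E \is a fin_num := fin_num_measure P E mE.
rewrite /AnyPwr -/E.
split; last first.
  have F1 : (1%E : \bar R) \is a fin_num by [].
  exact: (fine_le FE F1 (probability_le1 P mE)).
have : (1 - (expR (- t ^+ 2 / 2))%:E <= P E)%E.
  apply: le_trans le1; apply: leeB => //.
move=> h.
have F1 : (1 - (expR (- t ^+ 2 / 2))%:E)%E \is a fin_num by rewrite fin_numB.
have := fine_le F1 FE h.
done.
Qed.
Lemma n_one_le (n : nat) (mu : 'I_n -> R) : (n_one mu <= n)%N.
Proof. by rewrite /n_one -[X in (_ <= X)%N]card_ord max_card. Qed.

Lemma mu_max_ge (n : nat) (mu : 'I_n -> R) j : mu j != 0 -> `|mu j| <= mu_max mu.
Proof. by move=> mj; rewrite /mu_max (bigD1 j) //= le_max lexx. Qed.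

Lemma mu_max_att (n : nat) (mu : 'I_n -> R) :
  mu_max mu = 0 \/ exists i, mu i != 0 /\ mu_max mu = `|mu i|.
Proof.
rewrite /mu_max; elim/big_ind: _ => [|x y Hx Hy|j Hj]; first by left.
  rewrite /Num.max; by case: ifP.
by right; exists j.
Qed.

Lemma mu_max_pos (n : nat) (mu : 'I_n -> R) : (0 < n_one mu)%N ->
  exists i, mu i != 0 /\ mu_max mu = `|mu i| /\ 0 < mu_max mu.
Proof.
rewrite /n_one => /card_gt0P [j]; rewrite inE => mj.
have hj := @mu_max_ge _ _ _ mj.
have pos : 0 < mu_max mu by apply: lt_le_trans hj; rewrite normr_gt0.
case: (@mu_max_att n mu) => [h|[i [mi h]]]; first by move: pos; rewrite h ltxx.
by exists i; rewrite h; split => //; split => //; rewrite -h.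
Qed.
Lemma cBS_le (alpha : R) (n : nat) : 0 < alpha < 1 -> (0 < n)%N ->
  - ln (1 - alpha) <= 2 * n%:R ->
  c_Bon (2 * n) alpha <= Num.sqrt (2 * ln (8 * n%:R / (- ln (1 - alpha)))) /\
  c_Sid (2 * n) alpha <= Num.sqrt (2 * ln (8 * n%:R / (- ln (1 - alpha)))).
Proof.
move=> /andP [a0 a1] n0 an.
have l0 : 0 < - ln (1 - alpha).
  rewrite oppr_gt0 ln_lt0 //; apply/andP; split; lra.
have n0' : 0 < (n%:R : R) by rewrite ltr0n.
have a8 : - ln (1 - alpha) <= 8 * n%:R by lra.
set a := - ln (1 - alpha) in l0 an a8 *.
split.
  apply: c_le => //.
  rewrite natrM opprB addrC subrK ler_pM2l // lef_pV2 ?posrE ?mulr_gt0 //; lra.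
apply: c_le => //.
rewrite /powR; have -> : (1 - alpha == 0) = false by apply/negbTE; rewrite subr_eq0 gt_eqF.
have -> : (2 * n)%:R^-1 * ln (1 - alpha) = - (a / (2 * n%:R)) by rewrite natrM /a; field; rewrite gt_eqF.
have u0 : 0 <= a / (2 * n%:R) by rewrite divr_ge0 // ltW // mulr_gt0.
case: (@expR_bound _ u0) => [h|h]; last first.
  by move: h; rewrite ltr_pdivlMr ?mulr_gt0 // mul1r => h; lra.
apply: le_trans h.
have -> : a / (2 * n%:R) / 2 = a / (4 * n%:R) by field; rewrite gt_eqF.
exact: lexx.
Qed.
Lemma power_gen d (T : nat -> measurableType d) (P : forall n, probability (T n) R)
  (X : forall n, 'I_n -> {RV P n >-> R}) (mu : forall n, 'I_n -> R)
  (rho : nat -> nat -> R) (a : R) (c : nat -> R) :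
  0 < a ->
  (forall i, rho i i = 1) ->
  (forall n, jointly_gaussian (P n) (fun i => X n i) (mu n) (fun i j => rho i j)) ->
  (fun n => ((n_one (mu n))%:R : R)) @ \oo --> +oo ->
  (exists p1 : R, 0 < p1 <= 1 /\
     (fun n => ((n_one (mu n))%:R : R) / n%:R) @ \oo --> p1) ->
  (exists L : R, L < 1 /\
     (fun n => Num.sqrt (2 * ln ((n_one (mu n))%:R : R)) / mu_max (mu n))
       @ \oo --> L) ->
  (forall n, (0 < n)%N -> a <= 2 * n%:R -> c n <= Num.sqrt (2 * ln (8 * n%:R / a))) ->
  (fun n => AnyPwr (P n) (fun i => X n i) (mu n) (c n)) @ \oo --> (1 : R).
Proof.
move=> a0 rho1 JG n1oo [p1 [/andP[p0 p1le] cp]] [L [L1 cL]] cb.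
pose L' := Num.max ((1 + L) / 2) (1 / 2).
have L'pos : 0 < L' by rewrite lt_max; apply/orP; right.
have LL' : L < L' by rewrite lt_max; apply/orP; left; lra.
have L'1 : L' < 1 by rewrite gt_max; apply/andP; split; lra.
pose q := L'^-1.
have q1 : 1 < q by rewrite /q invf_gt1.
pose D := 2 * `|ln (16 / (a * p1))|.
have D0 : 0 <= D by rewrite mulr_ge0.
apply/cvgrPdist_lt => e e0.
pose K := 1 + 2 / e.
have K1 : 1 <= K by rewrite /K lerDl divr_ge0 // ltW.
pose B := (K + Num.sqrt D) / (q - 1).
move/cvgryPge: n1oo => n1oo.
have h1 := n1oo (Num.max (expR (B ^+ 2 / 2)) (Num.max 1 a)).
have p20 : 0 < p1 / 2 by lra.
have h2 := (cvgrPdist_lt _ _).1 cp _ p20.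
have LL0 : 0 < L' - L by lra.
have h3 := (cvgrPdist_lt _ _).1 cL _ LL0.
near=> n.
have H1 : Num.max (expR (B ^+ 2 / 2)) (Num.max 1 a) <= (n_one (mu n))%:R.
  by near: n; exact: h1.
have H2 : `|p1 - (n_one (mu n))%:R / n%:R| < p1 / 2 by near: n; exact: h2.
have H3 : `|L - Num.sqrt (2 * ln ((n_one (mu n))%:R : R)) / mu_max (mu n)| < L' - L.
  by near: n; exact: h3.
move: H1 H2 H3.
move: (@n_one_le n (mu n)).
set n1 := n_one (mu n) => n1n H1 H2 H3.
rewrite !ge_max in H1; case/and3P: H1 => H1a H1b H1c.
have n1pos : (0 < n1)%N by rewrite -(ler_nat R).
have npos : (0 < n)%N by apply: leq_trans n1pos n1n.
have n1R : 0 < (n1%:R : R) by rewrite ltr0n.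
have nR : 0 < (n%:R : R) by rewrite ltr0n.
have n1nR : (n1%:R : R) <= n%:R by rewrite ler_nat.
have [i [mi [Mi Mpos]]] := @mu_max_pos n (mu n) n1pos.
set M := mu_max (mu n) in Mi Mpos H3.
set u := 2 * ln (n1%:R : R) in H3.
have u0 : 0 <= u by rewrite mulr_ge0 // ln_ge0.
have sM : Num.sqrt u / M < L'.
  move: H3; rewrite ltr_norml; case/andP => h _; lra.
have qM : q * Num.sqrt u <= M.
  rewrite /q mulrC ler_pdivrMr //.
  by move: sM; rewrite ltr_pdivrMr // mulrC => /ltW.
have nle : n%:R < 2 * n1%:R / p1.
  move: H2; rewrite ltr_norml; case/andP => _ h.
  have : p1 / 2 < n1%:R / n%:R by lra.
  rewrite ltr_pdivlMr // => h'.
  rewrite ltr_pdivlMr //; nra.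
have an : a <= 2 * n%:R by lra.
have cn := cb n npos an.
have lnle : 2 * ln (8 * n%:R / a) <= u + D.
  have p8 : 0 < 8 * n%:R / a by rewrite divr_gt0 // mulr_gt0.
  have : ln (8 * n%:R / a) <= ln (n1%:R * (16 / (a * p1))).
    rewrite ler_ln ?posrE //; last by rewrite mulr_gt0 // divr_gt0 // mulr_gt0.
    have -> : n1%:R * (16 / (a * p1)) = 8 / a * (2 * n1%:R / p1).
      by field; apply/andP; split; rewrite gt_eqF.
    have -> : 8 * n%:R / a = 8 / a * n%:R by rewrite mulrAC.
    by rewrite ler_pM2l ?divr_gt0 // ltW.
  rewrite (@lnM _ n1%:R) ?posrE ?divr_gt0 ?mulr_gt0 // => h.
  have := ler_norm (ln (16 / (a * p1))).
  rewrite /u /D; lra.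
have sqD : Num.sqrt (u + D) <= Num.sqrt u + Num.sqrt D.
  rewrite -(@ler_pXn2r _ 2) ?nnegrE ?addr_ge0 ?sqrtr_ge0 //.
  rewrite sqr_sqrtr ?addr_ge0 // sqrrD !sqr_sqrtr //.
  have := mulr_ge0 (sqrtr_ge0 u) (sqrtr_ge0 D); lra.
have cle : c n <= Num.sqrt u + Num.sqrt D.
  apply: (le_trans cn); apply: le_trans sqD.
  by rewrite ler_sqrt ?addr_ge0.
have uB : B <= Num.sqrt u.
  have : B ^+ 2 <= u.
    have := H1a; rewrite -ler_ln ?posrE ?expR_gt0 // expRK /u; lra.
  move=> h; apply: (le_trans (ler_norm B)).
  by rewrite -sqrtr_sqr ler_sqrt.
have qB : (q - 1) * B = K + Num.sqrt D.
  by rewrite /B mulrC -mulrA mulVf ?mulr1 // subr_eq0 gt_eqF.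
have Kle : K <= `|mu n i| - c n.
  rewrite -Mi.
  have : (q - 1) * B <= (q - 1) * Num.sqrt u by rewrite ler_pM2l // subr_gt0.
  lra.
have [lb ub] := @power_lb _ _ (P n) n (X n) (mu n) (fun i j => rho i j) i (c n) K (rho1 i) (JG n) mi (le_trans ler01 K1) Kle.
have ex : expR (- K ^+ 2 / 2) < e.
  have : e^-1 < expR (K ^+ 2 / 2).
    apply: lt_le_trans (expR_ge1Dx _).
    have : 2 / e <= K by rewrite /K; lra.
    have : K <= K ^+ 2 by rewrite expr2 ler_peMr // (le_trans ler01 K1).
    move=> hh1 hh2.
    have : e^-1 = 2 / e / 2 by field; rewrite gt_eqF.
    lra.
  move=> hh; rewrite mulNr expRN -[e]invrK ltf_pV2 ?posrE ?invr_gt0 ?expR_gt0 //.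
rewrite ger0_norm; last by lra.
lra.
Unshelve. all: by end_near. Qed.
End S.
Theorem theorem5p3 (R : realType) (alpha : R) (rho : nat -> nat -> R)
  (d : measure_display) (T : nat -> measurableType d)
  (P : forall n, probability (T n) R)
  (X : forall n, 'I_n -> {RV P n >-> R})
  (mu : forall n, 'I_n -> R) :
  0 < alpha < 1 ->
  correlation_array rho ->
  weakly_dependent rho ->
  (forall n, jointly_gaussian (P n) (fun i => X n i) (mu n)
                (fun i j => rho i j)) ->
  (fun n => ((n_one (mu n))%:R : R)) @ \oo --> +oo ->
  (exists p1 : R, 0 < p1 <= 1 /\
     (fun n => ((n_one (mu n))%:R : R) / n%:R) @ \oo --> p1) ->
  (exists L : R, L < 1 /\
     (fun n => Num.sqrt (2 * ln ((n_one (mu n))%:R : R)) / mu_max (mu n))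
       @ \oo --> L) ->
  (fun n => AnyPwr (P n) (fun i => X n i) (mu n) (c_Bon (2 * n) alpha))
     @ \oo --> (1 : R) /\
  (fun n => AnyPwr (P n) (fun i => X n i) (mu n) (c_Sid (2 * n) alpha))
     @ \oo --> (1 : R).
Proof.
move=> /andP [a0 a1] [_ [rii _]] _ JG n1oo hp hL.
have l0 : 0 < - ln (1 - alpha).
  rewrite oppr_gt0 ln_lt0 //; apply/andP; split; lra.
have aa : 0 < alpha < 1 by apply/andP.
split.
- apply: (@power_gen R d T P X mu rho (- ln (1 - alpha))) => //.
  by move=> n n0 an; case: (@cBS_le R alpha n aa n0 an).
- apply: (@power_gen R d T P X mu rho (- ln (1 - alpha))) => //.
  by move=> n n0 an; case: (@cBS_le R alpha n aa n0 an).
Qed.
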